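(* Let $k,r,h$ be positive integers with $r\mid(k+h)$ and $h\ge 2$. If $C$ is a maximally recoverable local $(k,r,h)$-code defined over the finite field $\mathbb{F}_q$, then $q\ge k+1$.
   Context: A local $(k,r,h)$-code over $\mathbb{F}_q$ (with $r\mid(k+h)$) is a linear systematic code of dimension $k$ and length $k+h+\frac{k+h}{r}$ consisting of $k$ data symbols, $h$ heavy parity symbols (each a fixed $\mathbb{F}_q$-linear combination of all data symbols), and, after partitioning the $k+h$ data and heavy parity symbols into $\frac{k+h}{r}$ groups of size $r$, one local parity per group equal to the sum of the group's symbols. A local group is such a group together with its local parity. The code is maximally recoverable if for every set $E$ of coordinates containing exactly one coordinate from each local group, puncturing the code in $E$ (deleting those coordinates) yields a maximum distance separable $[k+h,k]$ code (minimum distance $h+1$). *)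

(* Defs.v *)
From HB Require Import structures.
From mathcomp Require Import all_boot all_order all_algebra.
Set Implicit Arguments. Unset Strict Implicit. Unset Printing Implicit Defensive.
Import GRing.Theory.
Local Open Scope ring_scope.

(* A local (k,r,h)-code over a finite field F is described by
   - Hc : 'M[F]_(h,k): row j gives the coefficients of heavy parity j;
   - g : 'I_(k+h) -> 'I_((k+h) %/ r): the partition of the k+h data and heavy
     parity symbols into (k+h)/r groups (each group must have size r).
   Symbols 0..k-1 of 'I_(k+h) are data symbols, k..k+h-1 heavy parities.
   Coordinates of the code: inl i (data / heavy parity symbol i),
   inr l (local parity of group l); total length k+h+(k+h)/r. *)

Definition coord (k r h : nat) : finType := ('I_(k+h) + 'I_((k+h) %/ r))%type.

Definition sym (F : fieldType) (k h : nat) (Hc : 'M[F]_(h,k)) (x : 'rV[F]_k)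
  (i : 'I_(k+h)) : F :=
  match split i with
  | inl a => x 0 a
  | inr j => \sum_(a < k) Hc j a * x 0 a
  end.

Definition encode (F : fieldType) (k r h : nat) (Hc : 'M[F]_(h,k))
  (g : 'I_(k+h) -> 'I_((k+h) %/ r)) (x : 'rV[F]_k) (c : coord k r h) : F :=
  match c with
  | inl i => sym Hc x i
  | inr l => \sum_(i < k+h | g i == l) sym Hc x i
  end.

Definition is_partition_r (k r h : nat) (g : 'I_(k+h) -> 'I_((k+h) %/ r)) :=
  forall l, #|[set i | g i == l]| = r.

Definition local_group (k r h : nat) (g : 'I_(k+h) -> 'I_((k+h) %/ r))
  (l : 'I_((k+h) %/ r)) : {set coord k r h} :=
  [set c | match c with inl i => g i == l | inr l' => l' == l end].

Definition punct_weight (F : finFieldType) (k r h : nat) (Hc : 'M[F]_(h,k))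
  (g : 'I_(k+h) -> 'I_((k+h) %/ r)) (E : {set coord k r h}) (x : 'rV[F]_k) : nat :=
  #|[set c | (c \notin E) && (encode Hc g x c != 0)]|.

(* the punctured code (length k+h) is an MDS [k+h,k] code: it has dimension k
   (the encoding restricted to the remaining coordinates is injective) and
   minimum distance exactly h+1 *)
Definition punct_MDS (F : finFieldType) (k r h : nat) (Hc : 'M[F]_(h,k))
  (g : 'I_(k+h) -> 'I_((k+h) %/ r)) (E : {set coord k r h}) : Prop :=
  (forall x y : 'rV[F]_k,
     (forall c, c \notin E -> encode Hc g x c = encode Hc g y c) -> x = y) /\
  (forall x : 'rV[F]_k, x != 0 -> (h.+1 <= punct_weight Hc g E x)%N) /\
  (exists2 x : 'rV[F]_k, x != 0 & punct_weight Hc g E x = h.+1).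

Definition maximally_recoverable (F : finFieldType) (k r h : nat)
  (Hc : 'M[F]_(h,k)) (g : 'I_(k+h) -> 'I_((k+h) %/ r)) : Prop :=
  forall E : {set coord k r h},
    (forall l, #|E :&: local_group g l| = 1%N) -> punct_MDS Hc g E.

(* Main.v *)
Require Import Defs.
From HB Require Import structures.
From mathcomp Require Import all_boot all_order all_algebra.
From mathcomp Require Import zify.
Import GRing.Theory.
Local Open Scope ring_scope.

Section S.
Variables (F : finFieldType) (k r h : nat) (Hc : 'M[F]_(h,k)) (g : 'I_(k+h) -> 'I_((k+h) %/ r)).

Definition EE : {set Defs.coord k r h} := [set c | if c is inr _ then true else false].

Definition heavy (x : 'M[F]_(1,k)) (j : 'I_h) : F := \sum_(a < k) Hc j a * x (0%R : 'I_1) a.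

Lemma sym_l x a : sym Hc x (lshift h a) = x (0%R : 'I_1) a.
Proof. by rewrite /sym (unsplitK (inl _ a)). Qed.

Lemma sym_r x j : sym Hc x (rshift k j) = heavy x j.
Proof. by rewrite /sym (unsplitK (inr _ j)). Qed.

Lemma weight_eq x : punct_weight Hc g EE x =
  (\sum_(a < k) (x (0%R : 'I_1) a != 0%R) + \sum_(j < h) (heavy x j != 0%R))%N.
Proof.
rewrite /punct_weight -sum1_card big_mkcond big_sumType /=.
rewrite [X in (_ + X)%N]big1; last by move=> l _; rewrite !inE.
rewrite addn0 big_split_ord /=; congr (_ + _)%N; apply: eq_bigr => i _;
  by rewrite !inE /= ?sym_l ?sym_r; case: (_ != 0).
Qed.

Lemma weight_bound x (Z : {set 'I_h}) :
  (forall j, j \in Z -> heavy x j = 0) ->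
  (punct_weight Hc g EE x <= \sum_(a < k) (x (0%R : 'I_1) a != 0%R) + (h - #|Z|))%N.
Proof.
move=> HZ; rewrite weight_eq leq_add2l.
have -> : (h - #|Z| = #|~: Z|)%N by rewrite [#|~: Z|]cardsCs setCK card_ord.
rewrite -sum1_card [X in (_ <= X)%N]big_mkcond /=.
apply: leq_sum => j _; rewrite inE; case: (boolP (j \in Z)) => /= jZ.
  by rewrite HZ // eqxx.
by case: (_ != 0).
Qed.

Lemma EE_ok l : #|EE :&: local_group g l| = 1%N.
Proof.
have -> : EE :&: local_group g l = [set inr l].
  by apply/setP => -[i|l']; rewrite !inE.
by rewrite cards1.
Qed.

Lemma sum_ind (G : 'I_k -> F) a : \sum_(c < k) G c * (c == a)%:R = G a.
Proof.
rewrite (bigD1 a) //= big1 => [|c /negbTE ->]; by rewrite ?eqxx ?mulr1 ?mulr0 ?addr0.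
Qed.

Lemma sum_indn (a : 'I_k) : (\sum_(c < k) (c == a) = 1)%N.
Proof.
rewrite (bigD1 a) //= big1 => [|c /negbTE ->] //; by rewrite eqxx.
Qed.

Hypothesis MR : maximally_recoverable Hc g.
Hypothesis h2 : (2 <= h)%N.

Lemma wlow x : x != 0 -> (h.+1 <= punct_weight Hc g EE x)%N.
Proof. by move=> xn0; have [_ [P _]] := @MR EE EE_ok; apply: P. Qed.

Lemma step1 j a : Hc j a != 0.
Proof.
apply/negP => /eqP H0.
pose x : 'rV[F]_k := delta_mx 0 a.
have xn0 : x != 0.
  by apply/negP => /eqP/matrixP/(_ 0 a); rewrite !mxE !eqxx /= => /eqP; rewrite oner_eq0.
have := wlow _ xn0.
have hv : forall j', heavy x j' = Hc j' a.
  move=> j'; rewrite /heavy.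
  under eq_bigr => c _ do rewrite mxE eqxx /=.
  by rewrite sum_ind.
have := @weight_bound x [set j] _.
rewrite cards1.
have -> : (\sum_(c < k) (x (0%R : 'I_1) c != 0%R) = 1)%N.
  rewrite -[RHS](sum_indn a); apply: eq_bigr => c _; rewrite mxE eqxx /=.
  by case: (c == a); rewrite ?oner_eq0 ?eqxx.
move=> W1 W2.
have W3 : (forall j0, j0 \in [set j] -> heavy x j0 = 0).
  by move=> j'; rewrite inE => /eqP ->; rewrite hv.
have := leq_trans W2 (W1 W3); lia.
Qed.


Lemma step2 (j1 j2 : 'I_h) a b : j1 != j2 -> a != b ->
  Hc j1 a * Hc j2 b - Hc j1 b * Hc j2 a != 0.
Proof.
move=> nj nab; apply/negP => /eqP H0.
pose x : 'rV[F]_k := \row_c (Hc j2 b * (c == a)%:R - Hc j2 a * (c == b)%:R).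
have hv : forall j, heavy x j = Hc j a * Hc j2 b - Hc j b * Hc j2 a.
  move=> j; rewrite /heavy.
  under eq_bigr => c _ do rewrite mxE mulrBr !mulrA.
  by rewrite sumrB !sum_ind.
have xa : x 0 a = Hc j2 b by rewrite mxE eqxx (negbTE nab) mulr1 mulr0 subr0.
have xn0 : x != 0.
  apply/negP => /eqP/matrixP/(_ 0 a); rewrite xa mxE => /eqP; by rewrite (negbTE (step1 _ _)).
have W2 := wlow _ xn0.
have W3 : (forall j0, j0 \in [set j1; j2] -> heavy x j0 = 0).
  move=> j'; rewrite !inE => /orP [] /eqP ->; rewrite hv //.
  by rewrite [Hc j2 a * _]mulrC subrr.
have W1 := weight_bound _ _ W3.
have D : (\sum_(c < k) (x (0%R : 'I_1) c != 0%R) <= 2)%N.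
  have <- : (\sum_(c < k) ((c == a) + (c == b)) = 2)%N.
    by rewrite big_split /= !sum_indn.
  apply: leq_sum => c _; rewrite mxE.
  case: (eqVneq c a) => [_|ca]; first by case: (_ != _).
  case: (eqVneq c b) => [_|cb]; first by case: (_ != _).
  by rewrite mulr0 mulr0 subr0 eqxx.
move: W1; rewrite cards2 nj => W1.
have := leq_trans W2 (leq_trans W1 (leq_add D (leqnn _))); lia.
Qed.

End S.

Theorem theorem19 (F : finFieldType) (k r h : nat)
  (Hc : 'M[F]_(h,k)) (g : 'I_(k+h) -> 'I_((k+h) %/ r)) :
  (0 < k)%N -> (0 < r)%N -> (0 < h)%N -> (r %| k + h)%N -> (2 <= h)%N ->
  is_partition_r g ->
  maximally_recoverable Hc g ->
  (k.+1 <= #|F|)%N.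
Proof.
move=> _ _ h0 _ h2 _ MR.
have h1 : (1 < h)%N by [].
pose j1 : 'I_h := Ordinal h0; pose j2 : 'I_h := Ordinal h1.
have nj : j1 != j2 by [].
pose f (o : option 'I_k) : F := if o is Some a then Hc j1 a / Hc j2 a else 0.
have nz : forall a, Hc j1 a / Hc j2 a != 0.
  by move=> a; rewrite mulf_neq0 ?invr_eq0 ?(@step1 _ _ _ _ _ _ MR h2).
have finj : injective f.
  move=> o1 o2; case: o1 => [a|]; case: o2 => [b|] //=.
  - move=> /eqP; rewrite eqr_div ?(@step1 _ _ _ _ _ _ MR h2) // => E.
    case: (eqVneq a b) => [->//|nab].
    by move: (@step2 _ _ _ _ _ _ MR h2 _ _ _ _ nj nab); rewrite (eqP E) subrr eqxx.
  - by move=> E; move: (nz a); rewrite E eqxx.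
  - by move=> E; move: (nz b); rewrite -E eqxx.
by have := leq_card f finj; rewrite card_option card_ord.
Qed.
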